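(* For all real numbers $a,b,c>0$, \[ \frac{(a+b+c)^3}{(ab+bc+ca)^2}\leq \frac{4a}{(b+c)^2}+\frac{4b}{(c+a)^2}+\frac{4c}{(a+b)^2}. \] *)

(* Defs.v *)
From Stdlib Require Import Reals.

(* Main.v *)
Require Import Defs.
From Stdlib Require Import Reals.
From Stdlib Require Import Lra.
Open Scope R_scope.

Definition Pol (a b c : R) : R :=
  4 * (a*b+b*c+c*a)^2 * (a*((c+a)*(a+b))^2 + b*((a+b)*(b+c))^2 + c*((b+c)*(c+a))^2)
  - (a+b+c)^3 * ((a+b)*(b+c)*(c+a))^2.

Lemma Pol_exp (t x y : R) : Pol (t+x+y) (t+x) t = 3 * t^0 * x^2 * y^7 + 24 * t^0 * x^3 * y^6 + 75 * t^0 * x^4 * y^5 + 114 * t^0 * x^5 * y^4 + 84 * t^0 * x^6 * y^3 + 24 * t^0 * x^7 * y^2 + 12 * t^1 * x^1 * y^7 + 131 * t^1 * x^2 * y^6 + 526 * t^1 * x^3 * y^5 + 1003 * t^1 * x^4 * y^4 + 944 * t^1 * x^5 * y^3 + 408 * t^1 * x^6 * y^2 + 80 * t^1 * x^7 * y^1 + 20 * t^1 * x^8 * y^0 + 12 * t^2 * x^0 * y^7 + 228 * t^2 * x^1 * y^6 + 1305 * t^2 * x^2 * y^5 + 3280 * t^2 * x^3 * y^4 + 3965 * t^2 * x^4 * y^3 + 2286 * t^2 * x^5 * y^2 + 700 * t^2 * x^6 * y^1 + 200 * t^2 * x^7 * y^0 + 124 * t^3 * x^0 * y^6 + 1348 *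 t^3 * x^1 * y^5 + 4985 * t^3 * x^2 * y^4 + 8086 * t^3 * x^3 * y^3 + 6073 * t^3 * x^4 * y^2 + 2436 * t^3 * x^5 * y^1 + 812 * t^3 * x^6 * y^0 + 488 * t^4 * x^0 * y^5 + 3520 * t^4 * x^1 * y^4 + 8488 * t^4 * x^2 * y^3 + 8512 * t^4 * x^3 * y^2 + 4280 * t^4 * x^4 * y^1 + 1712 * t^4 * x^5 * y^0 + 920 * t^5 * x^0 * y^4 + 4336 * t^5 * x^1 * y^3 + 6312 * t^5 * x^2 * y^2 + 3952 * t^5 * x^3 * y^1 + 1976 * t^5 * x^4 * y^0 + 832 * t^6 * x^0 * y^3 + 2256 * t^6 * x^1 * y^2 + 1776 * t^6 * x^2 * y^1 + 1184 * t^6 * x^3 * y^0 + 288 * t^7 * x^0 * y^2 + 288 * t^7 * x^1 * y^1 + 288 * t^7 * x^2 * y^0.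
Proof. unfold Pol. ring. Qed.

Lemma Pol_ord (a b c : R) : 0 <= c -> c <= b -> b <= a -> 0 <= Pol a b c.
Proof.
  intros H1 H2 H3.
  replace (Pol a b c) with (Pol (c + (b-c) + (a-b)) (c + (b-c)) c) by (f_equal; ring).
  rewrite Pol_exp.
  assert (0 <= b - c) by lra. assert (0 <= a - b) by lra.
  generalize dependent (b-c). generalize dependent (a-b). intros y Hy x Hx.
  repeat (apply Rplus_le_le_0_compat || apply Rmult_le_pos || apply pow_le || lra).
Qed.

Lemma Pol_sym1 a b c : Pol a b c = Pol b a c. Proof. unfold Pol; ring. Qed.
Lemma Pol_sym2 a b c : Pol a b c = Pol a c b. Proof. unfold Pol; ring. Qed.
Lemma Pol_sym3 a b c : Pol a b c = Pol c b a. Proof. unfold Pol; ring. Qed.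

Lemma Pol_nn a b c : 0 <= a -> 0 <= b -> 0 <= c -> 0 <= Pol a b c.
Proof.
  intros Ha Hb Hc.
  destruct (Rle_dec c b); destruct (Rle_dec b a); destruct (Rle_dec c a).
  all: try (apply Pol_ord; lra).
  all: try (rewrite Pol_sym1; apply Pol_ord; lra).
  all: try (rewrite Pol_sym2; apply Pol_ord; lra).
  all: try (rewrite Pol_sym3; apply Pol_ord; lra).
  all: try (rewrite Pol_sym1, Pol_sym2; apply Pol_ord; lra).
  all: try (rewrite Pol_sym2, Pol_sym1; apply Pol_ord; lra).
  all: try (rewrite Pol_sym1, Pol_sym3; apply Pol_ord; lra).
  all: try (rewrite Pol_sym3, Pol_sym1; apply Pol_ord; lra).
Qed.

Theorem mainTheorem1 (a b c : R) (ha : 0 < a) (hb : 0 < b) (hc : 0 < c) :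
  (a + b + c) ^ 3 / (a * b + b * c + c * a) ^ 2 <=
  4 * a / (b + c) ^ 2 + 4 * b / (c + a) ^ 2 + 4 * c / (a + b) ^ 2.
Proof.
  assert (Hq : 0 < a * b + b * c + c * a) by nra.
  assert (Hd : 0 < (a+b)*(b+c)*(c+a)) by (repeat apply Rmult_lt_0_compat; lra).
  apply Rge_le, Rminus_ge; apply Rle_ge.
  replace (4 * a / (b + c) ^ 2 + 4 * b / (c + a) ^ 2 + 4 * c / (a + b) ^ 2 -
     (a + b + c) ^ 3 / (a * b + b * c + c * a) ^ 2)
   with (Pol a b c / ((a * b + b * c + c * a)^2 * ((a+b)*(b+c)*(c+a))^2)).
  - apply Rmult_le_pos. apply Pol_nn; lra.
    apply Rlt_le, Rinv_0_lt_compat. apply Rmult_lt_0_compat; apply pow_lt; lra.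
  - unfold Pol. field. repeat split; lra.
Qed.
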